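(* Let $n\ge3$ be an integer, $k=n$, and let $X$ be the discrete-time Markov chain on $\mathbb{N}^{n-1}$ described in the context. Then $X$ is unstable (not ergodic).
   Context: $\mathbb{N}=\{0,1,2,\dots\}$. $\mathbf{0}$, $\mathbf{1}$ are the all-zero and all-one vectors of dimension $n-1$, $\mathbf{e}_l$ the $l$-th unit vector. For $j=0,\dots,n-1$, $R_j$ is the set of $\mathbf{x}\in\mathbb{N}^{n-1}$ with exactly $j$ zero entries. $X$ is the Markov chain on $\mathbb{N}^{n-1}$ with nonzero transition probabilities: from $\mathbf{x}\in R_0$, to $\mathbf{x}-\mathbf{1}$ w.p. $\frac{k-(n-1)}{k}$ and to $\mathbf{x}+\mathbf{e}_l$ w.p. $\frac1k$ ($l=1,\dots,n-1$); from $\mathbf{x}\in R_j$, $1\le j\le n-2$, to $\mathbf{x}+\mathbf{e}_l$ w.p. $\frac{k-(n-1-j)}{kj}$ if $x_l=0$ and w.p. $\frac1k$ if $x_l\ge1$; from $\mathbf{0}$ to $\mathbf{e}_l$ w.p. $\frac1{n-1}$. *)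

(* Defs.v *)
From HB Require Import structures.
From mathcomp Require Import all_boot all_order all_algebra.
From mathcomp Require Import classical_sets boolp reals ereal esum.
Set Implicit Arguments. Unset Strict Implicit. Unset Printing Implicit Defensive.
Import Order.TTheory GRing.Theory Num.Theory.
Local Open Scope classical_set_scope.
Local Open Scope ring_scope.

(* States: vectors x in N^m, with m = n-1. *)
Definition state (m : nat) := {ffun 'I_m -> nat}.

(* number of zero entries of x : x lies in R_j iff nzeros x = j *)
Definition nzeros m (x : state m) : nat := #|[set l | x l == 0%N]|.

Definition vdec m (x : state m) : state m := [ffun i => (x i).-1].
Definition vinc m (x : state m) (l : 'I_m) : state m :=
  [ffun i => if i == l then (x i).+1 else x i].

Definition up_prob (R : realType) m (k : nat) (x : state m) (l : 'I_m) : R :=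
  let j := nzeros x in
  if j == 0%N then 1 / k%:R
  else if j == m then 1 / m%:R
  else if x l == 0%N then (k%:R - (m - j)%:R) / (k%:R * j%:R)
  else 1 / k%:R.

Definition trans (R : realType) m (k : nat) (x y : state m) : R :=
  (if (nzeros x == 0%N) && (y == vdec x) then (k%:R - m%:R) / k%:R else 0)
  + \sum_(l < m) (if y == vinc x l then up_prob R k x l else 0).

(* first-passage probabilities: fp P t x y = P_x(first visit to y, at time >= 1,
   occurs at time t+1) *)
Fixpoint fp (R : realType) (S : choiceType) (P : S -> S -> R) (t : nat) (x y : S)
  : \bar R :=
  match t with
  | 0%N => (P x y)%:E
  | t'.+1 => \esum_(z in ~` [set y]) ((P x z)%:E * fp P t' z y)%E
  end.

Definition positive_recurrent (R : realType) (S : choiceType) (P : S -> S -> R) (x : S)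
  : Prop :=
  (\esum_(t in [set: nat]) fp P t x x = 1)%E /\
  (\esum_(t in [set: nat]) ((t.+1)%:R%:E * fp P t x x) < +oo)%E.

(* Main.v *)
Require Import Defs.
From mathcomp Require Import all_boot all_order all_algebra.
From mathcomp Require Import classical_sets boolp reals ereal esum.
From HB Require Import structures.
From mathcomp Require Import sequences topology normedtype.
From mathcomp Require Import ring lra.
Set Implicit Arguments. Unset Strict Implicit. Unset Printing Implicit Defensive.
Import Order.TTheory GRing.Theory Num.Theory.
Local Open Scope ring_scope.

Definition Ex (R : realType) m (z : state m) (h : state m -> R) : R :=
  (if nzeros z == 0%N then (m.+1%:R - m%:R) / m.+1%:R * h (vdec z) else 0)
  + \sum_(l < m) up_prob R m.+1 z l * h (vinc z l).

Lemma cE (R : realType) m : (m.+1%:R - m%:R) / m.+1%:R = 1 / m.+1%:R :> R.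
Proof. by rewrite -natrB // subSnn. Qed.

Lemma nzeros_le m (z : state m) : (nzeros z <= m)%N.
Proof. by rewrite /nzeros (leq_trans (max_card _)) // card_ord. Qed.

Lemma up_gt0 (R : realType) m (z : state m) l : 0 < up_prob R m.+1 z l.
Proof.
rewrite /up_prob; case: ifP => j0; first by rewrite divr_gt0 // ltr0n.
case: ifP => jm.
  rewrite divr_gt0 // ltr0n; apply/leq_trans: (nzeros_le z).
  by rewrite lt0n j0.
case: ifP => _; last by rewrite divr_gt0 // ltr0n.
rewrite -natrB; last by rewrite (leq_trans (leq_subr _ _)).
by rewrite divr_gt0 // ?mulr_gt0 ?ltr0n ?subn_gt0 ?ltnS ?leq_subr ?lt0n ?j0.
Qed.

Lemma up_ge0 (R : realType) m (z : state m) l : 0 <= up_prob R m.+1 z l.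
Proof. exact/ltW/up_gt0. Qed.

Lemma Ex_lin (R : realType) m (z : state m) a h1 h2 :
  Ex z (fun w => a * h1 w + h2 w) = a * Ex z h1 + Ex z h2 :> R.
Proof.
rewrite /Ex; under eq_bigr do rewrite mulrDr mulrCA.
rewrite big_split /= -mulr_sumr; case: ifP => _; ring.
Qed.

Lemma Ex_ext (R : realType) m (z : state m) (h1 h2 : state m -> R) :
  (forall w, h1 w = h2 w) -> Ex z h1 = Ex z h2.
Proof. by move=> e; have -> : h1 = h2 by apply/funext. Qed.

Lemma Ex_mono (R : realType) m (z : state m) (h1 h2 : state m -> R) :
  (nzeros z == 0%N -> h1 (vdec z) <= h2 (vdec z)) ->
  (forall l, h1 (vinc z l) <= h2 (vinc z l)) -> Ex z h1 <= Ex z h2.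
Proof.
move=> H1 H2; rewrite /Ex lerD //.
  case: ifP => // /H1 h; rewrite ler_wpM2l // cE divr_ge0 //.
by apply: ler_sum => l _; rewrite ler_wpM2l // up_ge0.
Qed.

Lemma Ex_single (R : realType) m (z : state m) (h : state m -> R) l :
  (forall w, 0 <= h w) -> up_prob R m.+1 z l * h (vinc z l) <= Ex z h.
Proof.
move=> h0; rewrite /Ex (bigD1 l) //= addrCA lerDl addr_ge0 //.
  by case: ifP => // _; rewrite mulr_ge0 // cE divr_ge0.
by rewrite sumr_ge0 // => i _; rewrite mulr_ge0 // up_ge0.
Qed.

Lemma sum_if (R : realType) m (z : state m) (a b : R) :
  \sum_(l < m) (if z l == 0%N then a else b) = a * (nzeros z)%:R + b * (m - nzeros z)%:R.
Proof.
rewrite (bigID (fun l => z l == 0%N)) /=.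
rewrite (eq_bigr (fun=> a)); last by move=> i ->.
rewrite [X in _ + X](eq_bigr (fun=> b)); last by move=> i /negPf ->.
rewrite !sumr_const /nzeros.
have -> : #|[set l | z l == 0%N]%classic| = #|[pred l : 'I_m | z l == 0%N]|.
  apply: eq_card => l; rewrite !inE /=; exact: asboolb.
have := cardC [pred l : 'I_m | z l == 0%N]; rewrite card_ord => hm.
set j := #|[pred l : 'I_m | z l == 0%N]|.
rewrite (@eq_card _ _ [predC [pred l : 'I_m | z l == 0%N]]) //.
have -> : (m - j)%N = #|[predC [pred l : 'I_m | z l == 0%N]]| by rewrite -{1}hm addKn.
by rewrite !mulr_natr.
Qed.

Lemma Ex1 (R : realType) m (z : state m) : (0 < m)%N -> Ex z (fun _ => 1) = 1 :> R.
Proof.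
move=> m0; rewrite /Ex cE mulr1.
under eq_bigr do rewrite mulr1.
have k0 : (m.+1%:R : R) != 0 by rewrite pnatr_eq0.
rewrite /up_prob; case: ifP => j0.
  rewrite sumr_const card_ord -mulr_natr -natr1.
  by field; rewrite natr1 pnatr_eq0.
rewrite /= add0r; have [jm|jm] := eqVneq (nzeros z) m.
  rewrite /=.
  rewrite sumr_const card_ord -mulr_natr.
  by field; rewrite pnatr_eq0 -lt0n.
rewrite /= sum_if.
have jle := nzeros_le z.
have jn0 : ((nzeros z)%:R : R) != 0 by rewrite pnatr_eq0 j0.
rewrite !natrB // ?(leq_trans (leq_subr _ _)) // -natr1.
by field; rewrite jn0 natr1 pnatr_eq0.
Qed.

Definition V (R : realType) m (z : state m) : R := \sum_(i < m) (z i)%:R.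
Arguments V R {m} z.

Lemma mem_nz m (z : state m) l :
  (l \in [set l | z l == 0%N]%classic) = (z l == 0%N).
Proof. by apply/idP/idP => [/set_mem //|h]; apply: mem_set. Qed.

Lemma V_vinc (R : realType) m (z : state m) l : V R (vinc z l) = V R z + 1.
Proof.
rewrite /V (bigD1 l) // [in RHS](bigD1 l) //= ffunE eqxx -addn1 natrD.
rewrite -!addrA; congr (_ + _); rewrite addrC; congr (_ + _).
by apply: eq_bigr => i ne; rewrite ffunE (negPf ne).
Qed.

Lemma V_vdec (R : realType) m (z : state m) :
  nzeros z = 0%N -> V R (vdec z) = V R z - m%:R.
Proof.
move=> /card0_eq h; rewrite /V.
have -> : m%:R = \sum_(i < m) (1 : R) by rewrite sumr_const card_ord.
rewrite -sumrB; apply: eq_bigr => i _; rewrite ffunE.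
have : z i != 0%N by have := h i; rewrite mem_nz /= => ->.
by rewrite -lt0n => zi; rewrite -subn1 natrB.
Qed.

Lemma ExV (R : realType) m (z : state m) : (0 < m)%N -> V R z <= Ex z (V R).
Proof.
move=> m0; have := Ex1 R z m0; rewrite /Ex /up_prob; case: ifP => j0 h.
  rewrite cE (V_vdec _ (eqP j0)).
  under eq_bigr do rewrite V_vinc.
  rewrite sumr_const card_ord -mulr_natr.
  have k0 : (m.+1%:R : R) != 0 by rewrite pnatr_eq0.
  rewrite le_eqVlt; apply/orP; left; apply/eqP.
  by rewrite -natr1; field; rewrite natr1 pnatr_eq0.
rewrite add0r; under eq_bigr do rewrite V_vinc.
rewrite -mulr_suml; move: h; rewrite add0r; under eq_bigr do rewrite mulr1.
by move=> ->; rewrite mul1r lerDl.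
Qed.

Lemma esum_pt (R : realType) (T : choiceType) (u : T) (v : R) : 0 <= v ->
  \esum_(w in [set: T]) ((if w == u then v else 0)%:E) = v%:E.
Proof.
move=> v0; rewrite (esumID [set u]); last by move=> w _; case: ifP.
rewrite setTI esum_set1 ?eqxx ?lee_fin // esum1 ?adde0 // => w [_ /= hne].
by rewrite (introF eqP hne).
Qed.

Lemma trans_split (R : realType) m (z w : state m) (h : state m -> R) :
  trans R m.+1 z w * h w =
  (if w == vdec z then (if nzeros z == 0%N then (m.+1%:R - m%:R) / m.+1%:R * h (vdec z) else 0) else 0)
  + \sum_(l < m) (if w == vinc z l then up_prob R m.+1 z l * h (vinc z l) else 0).
Proof.
rewrite /trans mulrDl mulr_suml; congr (_ + _).
  by case: (nzeros z == 0%N); case: eqP => [->|] //=; rewrite mul0r.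
by apply: eq_bigr => l _; case: eqP => [->|]; rewrite ?mul0r.
Qed.

Lemma esum_Ex (R : realType) m (z x : state m) (h : state m -> R) :
  (forall w, 0 <= h w) ->
  \esum_(w in ~` [set x]) ((trans R m.+1 z w)%:E * (h w)%:E)%E
  = (Ex z (fun w => if w == x then 0 else h w))%:E.
Proof.
move=> h0; rewrite esum_mkcond.
set h' := fun w => if w == x then 0 else h w.
have h'0 w : 0 <= h' w by rewrite /h'; case: ifP.
transitivity (\esum_(w in [set: state m]) (trans R m.+1 z w * h' w)%:E).
  apply: eq_esum => w _; rewrite in_setC in_set1 /h'.
  by case: (w == x) => /=; rewrite ?mulr0 ?EFinM.
under eq_esum do rewrite trans_split EFinD -sumEFin.
have c0 : 0 <= (m.+1%:R - m%:R) / m.+1%:R :> R by rewrite cE divr_ge0.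
rewrite esumD; first last.
- by move=> w _; rewrite sume_ge0 // => l _; case: ifP => // _; rewrite lee_fin mulr_ge0 ?up_ge0.
- by move=> w _; case: ifP => // _; case: ifP => // _; rewrite lee_fin mulr_ge0.
rewrite esum_pt; last by case: ifP => // _; rewrite mulr_ge0.
rewrite esum_sum; last by move=> w l _ _; case: ifP => // _; rewrite lee_fin mulr_ge0 ?up_ge0.
under eq_bigr do rewrite esum_pt ?mulr_ge0 ?up_ge0 //.
by rewrite sumEFin -EFinD.
Qed.

Fixpoint FF (R : realType) m (x : state m) (t : nat) (z : state m) : R :=
  match t with
  | 0 => 0
  | t'.+1 => Ex z (fun w => if w == x then 1 else @FF R m x t' w)
  end.
Arguments FF R {m} x t z.

Lemma Ex_sub (R : realType) m (z : state m) (h1 h2 : state m -> R) :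
  Ex z h1 - Ex z h2 = Ex z (fun w => h1 w - h2 w).
Proof.
have := Ex_lin z (-1) h2 h1; rewrite mulN1r addrC => <-.
by apply: Ex_ext => w; rewrite mulN1r addrC.
Qed.

Lemma Ex_const (R : realType) m (z : state m) (c : R) : (0 < m)%N ->
  Ex z (fun _ => c) = c.
Proof.
move=> m0; have h := Ex_lin z c (fun _ => 1) (fun _ => 0).
have e0 : Ex z (fun _ : state m => 0) = 0 :> R.
  rewrite /Ex big1 => [|l _]; last by rewrite mulr0.
  by case: ifP => _; rewrite ?mulr0 addr0.
rewrite Ex1 // e0 mulr1 addr0 in h.
by rewrite -[RHS]h; apply: Ex_ext => w /=; rewrite ?mulr1 ?addr0.
Qed.

Lemma Ex_ge0 (R : realType) m (z : state m) (h : state m -> R) :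
  (forall w, 0 <= h w) -> 0 <= Ex z h.
Proof.
move=> h0; rewrite /Ex addr_ge0 //.
  by case: ifP => // _; rewrite mulr_ge0 // cE divr_ge0.
by rewrite sumr_ge0 // => l _; rewrite mulr_ge0 ?up_ge0.
Qed.

Lemma Ex_le1 (R : realType) m (z : state m) (h : state m -> R) : (0 < m)%N ->
  (forall w, h w <= 1) -> Ex z h <= 1.
Proof.
move=> m0 h1; rewrite -[leRHS](Ex1 R z m0); exact: Ex_mono.
Qed.

Lemma FF_bounds (R : realType) m (x : state m) t : (0 < m)%N ->
  forall z, [&& 0 <= FF R x t z, FF R x t z <= FF R x t.+1 z & FF R x t.+1 z <= 1].
Proof.
move=> m0; elim: t => [|t IH] z /=.
  rewrite lexx /=; apply/andP; split.
    by apply: Ex_ge0 => w; case: ifP.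
  by apply: Ex_le1 => // w; case: ifP.
have H1 : forall w, 0 <= FF R x t w by move=> w; case/and3P: (IH w).
have H2 : forall w, FF R x t w <= FF R x t.+1 w by move=> w; case/and3P: (IH w).
have H3 : forall w, FF R x t.+1 w <= 1 by move=> w; case/and3P: (IH w).
apply/and3P; split.
- by apply: Ex_ge0 => w; case: ifP => // _; exact: H1.
- by apply: Ex_mono => [_|l]; case: ifP => // _; exact: H2.
- by apply: Ex_le1 => // w; case: ifP => // _; exact: H3.
Qed.

Lemma trans_Ex (R : realType) m (z w : state m) :
  trans R m.+1 z w = Ex z (fun u => if u == w then 1 else 0).
Proof.
have h := trans_split z w (fun _ : state m => (1:R)).
rewrite /= !mulr1 in h; rewrite h /Ex.
congr (_ + _).
  by rewrite eq_sym; case: ifP => _; case: ifP => _; rewrite ?mulr1 ?mulr0.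
by apply: eq_bigr => l _; rewrite eq_sym; case: ifP; rewrite ?mulr1 ?mulr0.
Qed.

Lemma fp_FF (R : realType) m (x : state m) t : (0 < m)%N ->
  forall z, fp (trans R m.+1) t z x = (FF R x t.+1 z - FF R x t z)%:E.
Proof.
move=> m0; elim: t => [|t IH] z.
  by rewrite /= subr0 trans_Ex.
rewrite /=.
under eq_esum do rewrite IH.
rewrite esum_Ex; last by move=> w; case/and3P: (@FF_bounds R m x t m0 w) => _ h _; rewrite subr_ge0.
rewrite Ex_sub; congr (_%:E); apply: Ex_ext => w; by case: ifP => //; rewrite subrr.
Qed.

Lemma Ex_scale (R : realType) m (z : state m) (b : R) g : (0 < m)%N ->
  Ex z (fun w => b * g w) = b * Ex z g.
Proof.
move=> m0; have := Ex_lin z b g (fun _ => 0); rewrite Ex_const // addr0 => <-.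
by apply: Ex_ext => w; rewrite addr0.
Qed.

Lemma Q_rec (R : realType) m (x : state m) t z : (0 < m)%N ->
  1 - FF R x t.+1 z = Ex z (fun w => if w == x then 0 else 1 - FF R x t w).
Proof.
move=> m0; rewrite /= -{1}(Ex_const z (1:R) m0) Ex_sub.
by apply: Ex_ext => w; case: ifP => _; rewrite ?subrr.
Qed.

Lemma FF_ge0 (R : realType) m (x : state m) t z : (0 < m)%N -> 0 <= FF R x t z.
Proof. by move=> m0; case/and3P: (FF_bounds R x t m0 z). Qed.

Lemma FF_le1 (R : realType) m (x : state m) t z : (0 < m)%N -> FF R x t z <= 1.
Proof.
move=> m0; case/and3P: (FF_bounds R x t m0 z) => _ /le_trans h /h; exact.
Qed.

Lemma key (R : realType) m (x : state m) t : (0 < m)%N -> forall z,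
  V R z <= V R x * FF R x t z + (V R z + t%:R) * (1 - FF R x t z).
Proof.
move=> m0; elim: t => [|t IH] z.
  by rewrite /= mulr0 add0r subr0 addr0 mulr1.
apply: le_trans (@ExV R m z m0) _.
have -> : Ex z (V R) = Ex z (fun w => if w == x then V R x else V R w).
  by apply: Ex_ext => w; case: eqP => [->|].
set h2 := fun w => if w == x then V R x else
   V R x * FF R x t w + (V R z + t.+1%:R) * (1 - FF R x t w).
have step : forall w, V R w <= V R z + 1 ->
    (if w == x then V R x else V R w) <= h2 w.
  move=> w hw; rewrite /h2; case: ifP => // _.
  apply: le_trans (IH w) _; rewrite lerD2l ler_wpM2r //.
    by rewrite subr_ge0 FF_le1.
  by rewrite -natr1; lra.
apply: le_trans (Ex_mono (h2 := h2) _ _) _.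
- move=> /eqP j0; apply: step; rewrite V_vdec //.
  by have := ler0n R m; lra.
- by move=> l; apply: step; rewrite V_vinc.
have -> : Ex z h2 = Ex z (fun w => V R x * (if w == x then 1 else FF R x t w)
     + (V R z + t.+1%:R) * (if w == x then 0 else 1 - FF R x t w)).
  by apply: Ex_ext => w; rewrite /h2; case: ifP => _; rewrite ?mulr1 ?mulr0 ?addr0.
rewrite Ex_lin Ex_scale // -Q_rec //.
Qed.

Lemma vinc_neq m (x : state m) l : vinc x l != x.
Proof.
apply/eqP => /(congr1 (fun f : state m => f l)); rewrite ffunE eqxx => h.
by move/eqP: h; rewrite eqn_leq ltnn.
Qed.

Lemma Q_lower (R : realType) m (x : state m) (l : 'I_m) t : (0 < m)%N ->
  up_prob R m.+1 x l / t.+1%:R <= 1 - FF R x t.+1 x.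
Proof.
move=> m0; rewrite Q_rec //.
have hy := key R x t m0 (vinc x l); rewrite V_vinc in hy.
have h1 : 1 <= t.+1%:R * (1 - FF R x t (vinc x l)).
  rewrite -natr1; nra.
apply: le_trans (Ex_single _ l _); last by move=> w; case: ifP => // _; rewrite subr_ge0 FF_le1.
rewrite (negPf (vinc_neq x l)) ler_pdivrMr ?ltr0n // -mulrA ler_pMr ?up_gt0 //.
by rewrite mulrC.
Qed.

Lemma seqA (R : realType) (F : nat -> R) T : F 0%N = 0 ->
  \sum_(t < T) F t + \sum_(s < T) (s.+1)%:R * (F s.+1 - F s) = T%:R * F T.
Proof.
move=> F0; elim: T => [|T IH]; first by rewrite !big_ord0 F0 addr0 mul0r.
rewrite !big_ord_recr /= -natr1.
have -> : \sum_(i < T) F i + F T + (\sum_(i < T) (i.+1)%:R * (F i.+1 - F i) + (T%:R + 1) * (F T.+1 - F T))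
  = (\sum_(i < T) F i + \sum_(i < T) (i.+1)%:R * (F i.+1 - F i)) + F T + (T%:R + 1) * (F T.+1 - F T) by ring.
rewrite IH; ring.
Qed.

Lemma seqB (R : realType) (F : nat -> R) T d : (forall s, F s <= F s.+1) ->
  T%:R * (F (T + d)%N - F T) <= \sum_(s < T + d) (s.+1)%:R * (F s.+1 - F s)
                                 - \sum_(s < T) (s.+1)%:R * (F s.+1 - F s).
Proof.
move=> Fm; elim: d => [|d IH]; first by rewrite addn0 !subrr mulr0.
rewrite addnS big_ord_recr /=.
have h1 : T%:R * (F (T + d).+1 - F (T + d)%N) <= (T + d).+1%:R * (F (T + d).+1 - F (T + d)%N).
  by rewrite ler_wpM2r ?subr_ge0 // ler_nat leqW // leq_addr.
lra.
Qed.

Lemma F_mono (R : realType) (F : nat -> R) a d : (forall s, F s <= F s.+1) ->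
  F a <= F (a + d)%N.
Proof.
move=> Fm; elim: d => [|d IH]; first by rewrite addn0.
by rewrite addnS (le_trans IH).
Qed.

Lemma harm_unbounded (R : realType) (M : R) :
  ~ (forall T, \sum_(t < T) (t.+1%:R)^-1 <= M).
Proof.
move=> hM; apply: (@dvg_harmonic R).
apply: nondecreasing_is_cvgn.
  by apply: nondecreasing_series => n _ _; rewrite /harmonic invr_ge0.
exists M => _ [n _ <-]; rewrite /series /= big_mkord; exact: hM.
Qed.

Local Open Scope classical_set_scope.

Lemma partial_le (R : realType) (u : nat -> R) N : (forall n, 0 <= u n) ->
  ((\sum_(s < N) u s)%:E <= \esum_(t in [set: nat]) (u t)%:E)%E.
Proof.
move=> u0; rewrite -nneseries_esumT; last by move=> n; rewrite lee_fin.
rewrite -sumEFin.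
have -> : (\sum_(s < N) (u s)%:E = \sum_(0 <= s < N) (u s)%:E)%E by rewrite big_mkord.
by apply: nneseries_lim_ge => n _ _; rewrite lee_fin.
Qed.

Lemma esum_le (R : realType) (u : nat -> R) c : (forall n, 0 <= u n) ->
  (forall N, \sum_(s < N) u s <= c) ->
  (\esum_(t in [set: nat]) (u t)%:E <= c%:E)%E.
Proof.
move=> u0 hc; rewrite -nneseries_esumT; last by move=> n; rewrite lee_fin.
apply: lime_le; first by apply: is_cvg_nneseries => n _ _; rewrite lee_fin.
by apply: nearW => N; rewrite sumEFin lee_fin big_mkord.
Qed.

Theorem proposition7p5 (R : realType) (n : nat) :
  (3 <= n)%N ->
  forall x : state n.-1, ~ positive_recurrent (trans R n) x.
Proof.
case: n => [//|m] n3 x [HA HB] /=.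
have m0 : (0 < m)%N by rewrite -ltnS (leq_trans _ n3).
set F := fun t => FF R x t x.
have F0 : F 0%N = 0 by [].
have Fm : forall s, F s <= F s.+1.
  by move=> s; case/and3P: (FF_bounds R x s m0 x).
have Fle1 : forall s, F s <= 1 by move=> s; exact: FF_le1.
have f0 : forall s, 0 <= F s.+1 - F s by move=> s; rewrite subr_ge0.
have HA' : (\esum_(t in [set: nat]) (F t.+1 - F t)%:E = 1)%E.
  by rewrite -HA; apply: eq_esum => t _; rewrite fp_FF.
have HB' : (\esum_(t in [set: nat]) ((t.+1)%:R * (F t.+1 - F t))%:E < +oo)%E.
  by rewrite (le_lt_trans _ HB) // le_eqVlt; apply/orP; left; apply/eqP;
     apply: eq_esum => t _; rewrite fp_FF.
set G := fun N => \sum_(s < N) (s.+1)%:R * (F s.+1 - F s).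
set E := (\esum_(t in [set: nat]) ((t.+1)%:R * (F t.+1 - F t))%:E)%E.
have E0 : (0 <= E)%E by apply: esum_ge0 => t _; rewrite lee_fin mulr_ge0.
have Efin : E \is a fin_num by rewrite ge0_fin_numE.
have Gb : forall N, G N <= fine E.
  move=> N; rewrite -lee_fin fineK //; apply: partial_le => s.
  by rewrite mulr_ge0.
have Qsmall : forall eps, 0 < eps -> exists N, 1 - F N < eps.
  move=> eps e0; case: (pselect (exists N, 1 - F N < eps)) => // hn; exfalso.
  have hN : forall N, F N <= 1 - eps.
    move=> N; case: (lerP (F N) (1 - eps)) => // h; exfalso; apply: hn; exists N; lra.
  have : (\esum_(t in [set: nat]) (F t.+1 - F t)%:E <= (1 - eps)%:E)%E.
    apply: esum_le => // N.
    rewrite -(big_mkord xpredT (fun s => F s.+1 - F s)) telescope_sumr // F0 subr0.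
    exact: hN.
  rewrite HA' lee_fin; lra.
pose l0 : 'I_m := Ordinal m0.
set p := up_prob R m.+1 x l0.
have p0 : 0 < p by apply: up_gt0.
have Hq : forall t, p / t.+1%:R <= 1 - F t.+1 by move=> t; exact: (Q_lower R x l0 t m0).
apply: (@harm_unbounded R ((fine E + 1) / p)) => T.
rewrite ler_pdivlMr // mulrC mulr_sumr.
case: T => [|T].
  by rewrite big_ord0; have := Gb 0%N; rewrite /G big_ord0; lra.
set T' := T.+1.
have e0 : 0 < (T'%:R^-1 : R) by rewrite invr_gt0 ltr0n.
have [N hN] := Qsmall _ e0.
have s1 : \sum_(t < T') p * (t.+1%:R)^-1 <= \sum_(t < T') (1 - F t).
  by apply: ler_sum => t _; apply: le_trans (Hq t) _; rewrite lerD2l lerN2.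
have s2 : \sum_(t < T') (1 - F t) = T'%:R - \sum_(t < T') F t.
  by rewrite sumrB sumr_const card_ord.
have A := seqA T' F0.
have B := seqB T' N Fm.
have C : T'%:R * (1 - F (T' + N)%N) <= 1.
  have T0 : (0 : R) < T'%:R by rewrite ltr0n.
  apply: (@le_trans _ _ (T'%:R * (1 - F N))).
    rewrite ler_wpM2l ?ler0n // lerD2l lerN2 addnC; exact: F_mono.
  apply: (@le_trans _ _ (T'%:R * T'%:R^-1)); last by rewrite mulfV // lt0r_neq0.
  by apply/ltW; rewrite ltr_pM2l.
have D := Gb (T' + N)%N.
rewrite /G in A B D.
nra.
Qed.
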